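(* The expected cost of the direct referral reward scheme on the chain defined in the context is $\Theta(P_h^2\,n\,h^2)$.
   Context: Chain with agents at positions $1,2,\dots$, each independently holding an answer with probability $p=1/n$; $h\ge1$. $r(i,s)$ is the reward to the agent at position $i$ when the first answer is at position $i+s\le h$; if there is no answer among positions $1,\dots,h$ nothing is paid. Let $P_i=\sum_{j=1}^i p(1-p)^{j-1}$ and $R_i=\sum_{s=1}^{h-i} r(i,s)p(1-p)^{s-1}$ (so $R_h=0$). The scheme is defined backwards by: $r(i,1)=nR_{i+1}+P_{h-i-1}$ for $i\le h-1$; $r(i,0)=\sum_{t=i}^{h-1}r(t,1)+1$ for $1\le i\le h$; $r(i,s)=1$ if $i+s\le h$ and $s>1$; $r(i,s)=0$ otherwise. The expected cost is $\mathbb{E}[\sum_{i=1}^{J}r(i,J-i)]$ where $J$ is the position of the first answer if $J\le h$ (empty sum otherwise). *)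

(* Defs.v *)
From mathcomp Require Import all_boot all_order all_algebra.
From mathcomp Require Import reals.
Set Implicit Arguments. Unset Strict Implicit. Unset Printing Implicit Defensive.
Import Order.TTheory GRing.Theory Num.Theory.
Local Open Scope ring_scope.

(* Direct referral reward scheme on a chain (positions 1, 2, ...).
   n : R is the parameter with p = 1/n; h : nat is the horizon. *)
Section Chain.
Variable R : realType.

Definition pr (n : R) : R := n^-1.

Definition Pcum (n : R) (i : nat) : R :=
  \sum_(1 <= j < i.+1) pr n * (1 - pr n) ^+ j.-1.

(* Auxiliary (fuel-driven) computation of r(i,1), defined backwards in i:
   r(i,1) = n R_{i+1} + P_{h-i-1}, where
   R_{i+1} = \sum_{s=1}^{h-i-1} r(i+1,s) p (1-p)^{s-1},
   with r(i+1,1) computed recursively and r(i+1,s) = 1 for s > 1.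
   The fuel k = h - i is always sufficient. *)
Fixpoint r1f (n : R) (h : nat) (k : nat) (i : nat) : R :=
  match k with
  | 0 => 0
  | k'.+1 =>
      n * (\sum_(1 <= s < h - i)
             (if s == 1%N then r1f n h k' i.+1 else 1) * (pr n * (1 - pr n) ^+ s.-1))
      + Pcum n (h - i - 1)
  end.

Definition r1 (n : R) (h i : nat) : R := r1f n h (h - i) i.

(* The reward r(i,s) paid to the agent at position i when the first answer
   is at position i+s. *)
Definition rew (n : R) (h i s : nat) : R :=
  if (1 <= i)%N && (i + s <= h)%N then
    if s == 0%N then (\sum_(i <= t < h) r1 n h t) + 1
    else if s == 1%N then r1 n h i
    else 1
  else 0.

Definition Rsum (n : R) (h i : nat) : R :=
  \sum_(1 <= s < (h - i).+1) rew n h i s * (pr n * (1 - pr n) ^+ s.-1).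

(* Expected cost E[ \sum_{i=1}^J r(i, J-i) ], J = position of first answer,
   P(J = j) = p (1-p)^{j-1}; nothing is paid if J > h. *)
Definition expected_cost (n : R) (h : nat) : R :=
  \sum_(1 <= j < h.+1) (pr n * (1 - pr n) ^+ j.-1) *
     (\sum_(1 <= i < j.+1) rew n h i (j - i)).

End Chain.

(* Main.v *)
Require Import Defs.
From mathcomp Require Import all_boot all_order all_algebra.
From mathcomp Require Import reals.
From mathcomp Require Import ring lra zify.
Import Order.TTheory GRing.Theory Num.Theory.
Local Open Scope ring_scope.

Section Aux.
Variable R : realType.
Variable n : R.
Hypothesis hn : 1 <= n.

Local Notation p := (pr n).
Local Notation q := (1 - pr n).

Lemma n_neq0 : n != 0. Proof. apply/eqP => h0; move: hn; rewrite h0; (have := hn; lra). Qed.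
Lemma np1 : n * p = 1. Proof. by rewrite /pr mulfV // n_neq0. Qed.
Lemma p_ge0 : 0 <= p. Proof. rewrite /pr invr_ge0. (have := hn; lra). Qed.
Lemma p_le1 : p <= 1. Proof. rewrite /pr invf_le1 //; have := hn; lra. Qed.
Lemma q_ge0 : 0 <= q. Proof. have := p_le1; (have := hn; lra). Qed.
Lemma q_le1 : q <= 1. Proof. have := p_ge0; (have := hn; lra). Qed.

Lemma Pclosed m : Pcum n m = 1 - q ^+ m.
Proof.
elim: m => [|m IH]; first by rewrite /Pcum big_geq // expr0 subrr.
rewrite /Pcum big_nat_recr //= -/(Pcum n m) IH exprS; ring.
Qed.

Lemma qX_ge0 m : 0 <= q ^+ m. Proof. exact: exprn_ge0 q_ge0. Qed.
Lemma qX_le1 m : q ^+ m <= 1. Proof. apply: exprn_ile1; [exact q_ge0|exact q_le1]. Qed.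
Lemma qX_dec m : q ^+ m.+1 <= q ^+ m.
Proof. rewrite exprS; have := qX_ge0 m; have := q_le1; have := q_ge0; (have := hn; nra). Qed.
Lemma qX_mono a b : (a <= b)%N -> q ^+ b <= q ^+ a.
Proof.
move=> /subnK <-; elim: (b - a)%N => [|k IH]; first by rewrite add0n.
rewrite addSn; apply: le_trans (qX_dec _) IH.
Qed.

Lemma P_ge0 m : 0 <= Pcum n m. Proof. rewrite Pclosed; have := qX_le1 m; (have := hn; lra). Qed.
Lemma P_mono a b : (a <= b)%N -> Pcum n a <= Pcum n b.
Proof. move=> /qX_mono; rewrite !Pclosed; (have := hn; lra). Qed.
Lemma P_sub a b : Pcum n (a + b) <= Pcum n a + Pcum n b.
Proof.
rewrite !Pclosed exprD; have := qX_le1 a; have := qX_le1 b;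
have := qX_ge0 a; have := qX_ge0 b; (have := hn; nra).
Qed.
Lemma P_mul k m : Pcum n (k * m) <= k%:R * Pcum n m.
Proof.
elim: k => [|k IH]; first by rewrite mul0n mul0r Pclosed expr0 subrr.
rewrite mulSn; apply: le_trans (P_sub _ _) _; rewrite -addn1 natrD; (have := hn; lra).
Qed.
Lemma P1 : Pcum n 1 = p. Proof. by rewrite Pclosed expr1; ring. Qed.
Lemma nP_ge1 h : (1 <= h)%N -> 1 <= n * Pcum n h.
Proof.
move=> /P_mono; rewrite P1 => H; rewrite -np1; apply: ler_wpM2l => //; (have := hn; lra).
Qed.
Lemma P_le_hp h : Pcum n h <= h%:R * p.
Proof.
elim: h => [|h IH]; first by rewrite Pclosed expr0 subrr mul0r.
rewrite Pclosed in IH; rewrite Pclosed exprS -natr1.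
have := qX_ge0 h; have := qX_le1 h; have := p_ge0; nra.
Qed.

Lemma w_ge0 s : 0 <= p * q ^+ s. Proof. exact: mulr_ge0 p_ge0 (qX_ge0 _). Qed.

Lemma sum_w a b : (1 <= a)%N -> (a <= b)%N ->
  \sum_(a <= s < b) p * q ^+ s.-1 = Pcum n b.-1 - Pcum n a.-1.
Proof.
move=> ha hab; rewrite /Pcum !prednK ?(leq_trans ha hab) //.
rewrite (big_cat_nat (n:=a) (m:=1) (p:=b)) //=; ring.
Qed.


Lemma r1f_base i : r1f n (i.+1) 1 i = 0.
Proof.
rewrite /= subSnn big_geq // subnn Pclosed expr0 subrr mulr0 addr0 //.
Qed.

Lemma r1f_rec k i : (1 <= k)%N ->
  r1f n (i + k.+1) k.+1 i = r1f n (i + k.+1) k i.+1 + (n + 1) * Pcum n k - 1.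
Proof.
move=> hk.
rewrite [LHS]/= addKn subSS subn0 big_ltn ?ltnS //= expr0 mulr1.
rewrite (eq_big_nat _ _ (F2 := fun s => p * q ^+ s.-1)); last first.
  by move=> s /andP[h2 _]; case: eqP h2 => [->|]; rewrite ?mul1r.
rewrite sum_w // P1 /=.
rewrite /pr; field; exact: n_neq0.
Qed.

Lemma step_id j : (n + 1) * Pcum n j.+1 - 1 = n * Pcum n j + p * q ^+ j.
Proof. rewrite !Pclosed exprS /pr; field; exact: n_neq0. Qed.

Lemma r1f_bounds k : forall i h, (i + k)%N = h -> (1 <= k)%N ->
  n * (\sum_(0 <= m < k.-1) Pcum n m) <= r1f n h k i /\
  r1f n h k i <= (k.-1)%:R * ((n + 1) * Pcum n h).
Proof.
elim: k => [//|k IH] i h <- _.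
case: k IH => [|k] IH.
  rewrite addn1 r1f_base /= big_geq // mulr0 mul0r; split; lra.
have hP := P_ge0.
have [IHl IHu] := IH i.+1 (i + k.+2)%N (addSnnS _ _) isT.
rewrite [k.+1.-1]/= in IHl IHu.
rewrite r1f_rec //; split.
  rewrite [k.+2.-1]/= big_nat_recr // mulrDr.
  have := step_id k; have := w_ge0 k; lra.
rewrite [_.+1.-1]/= -natr1.
have : Pcum n k.+1 <= Pcum n (i + k.+2) by apply: P_mono; lia.
have := hP k.+1; have := hP (i + k.+2)%N; have := hn; nra.
Qed.

Lemma sub_range (F : nat -> R) a b c d : (a <= c)%N -> (c <= d)%N -> (d <= b)%N ->
  (forall t, 0 <= F t) -> \sum_(c <= t < d) F t <= \sum_(a <= t < b) F t.
Proof.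
move=> ac cd db F0.
have E : \sum_(a <= t < b) F t =
  \sum_(a <= t < c) F t + (\sum_(c <= t < d) F t + \sum_(d <= t < b) F t).
  rewrite (big_cat_nat (n:=c) (m:=a) (p:=b)) //; last exact: leq_trans cd db.
  by rewrite (big_cat_nat (n:=d) (m:=c) (p:=b)).
have H1 : 0 <= \sum_(a <= t < c) F t by apply: sumr_ge0 => t _.
have H2 : 0 <= \sum_(d <= t < b) F t by apply: sumr_ge0 => t _.
rewrite E; lra.
Qed.

Definition U (h : nat) := 2 * n * h%:R * Pcum n h.

Lemma U_ge0 h : 0 <= U h.
Proof. rewrite /U; repeat apply: mulr_ge0 => //; [have := hn; lra | exact: P_ge0]. Qed.

Lemma r1_lo h t : (t < h)%N ->
  n * (\sum_(0 <= m < (h - t).-1) Pcum n m) <= r1 n h t.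
Proof.
move=> th; rewrite /r1.
have := @r1f_bounds (h - t) t h (subnKC (ltnW th)); rewrite subn_gt0 => /(_ th) [].
done.
Qed.

Lemma r1_up h t : r1 n h t <= U h.
Proof.
rewrite /r1; case: (ltnP t h) => th.
  have := @r1f_bounds (h - t) t h (subnKC (ltnW th)); rewrite subn_gt0 => /(_ th) [_ H].
  apply: le_trans H _; rewrite /U.
  have : ((h - t).-1%:R <= h%:R :> R) by rewrite ler_nat; lia.
  have hP := P_ge0 h.
  move=> Kh; apply: le_trans (ler_wpM2r _ Kh) _.
    apply: mulr_ge0 => //; have := hn; lra.
  have := mulr_ge0 (ler0n R h) hP; have := hn; nra.
have -> : (h - t = 0)%N by lia.
exact: U_ge0.
Qed.

Lemma sum_ge0_nat (F : nat -> R) a b : (forall t, 0 <= F t) -> 0 <= \sum_(a <= t < b) F t.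
Proof. by move=> F0; apply: sumr_ge0 => t _. Qed.

Lemma r1_ge0 h t : 0 <= r1 n h t.
Proof.
case: (ltnP t h) => th.
  apply: le_trans _ (@r1_lo h t th); apply: mulr_ge0; [have := hn; lra|].
  exact: sum_ge0_nat P_ge0.
by rewrite /r1 (_ : (h - t = 0)%N) //; lia.
Qed.

Lemma rew_ge0 h i s : 0 <= rew n h i s.
Proof.
rewrite /rew; case: ifP => // _; case: ifP => _.
  have := @sum_ge0_nat (r1 n h) i h (@r1_ge0 h); lra.
by case: ifP => _ //; exact: r1_ge0.
Qed.

Lemma rew_le_pos h i s : (1 <= s)%N -> rew n h i s <= U h + 1.
Proof.
move=> hs; have := U_ge0 h; rewrite /rew; case: ifP => _; last lra.
rewrite (_ : (s == 0%N) = false); last by case: s hs.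
case: ifP => _; last lra.
have := r1_up h i; lra.
Qed.

Lemma rew0_le h i : rew n h i 0 <= h%:R * U h + 1.
Proof.
have := U_ge0 h; rewrite /rew; case: ifP => /= [/andP[_ ih]|_]; last first.
  have := ler0n R h; nra.
move=> U0; apply: lerD => //.
apply: le_trans (ler_sum_nat (G := fun _ => U h) _) _.
  by move=> t _; exact: r1_up.
rewrite sumr_const_nat -[U h *+ _]mulr_natr (mulrC h%:R); apply: ler_wpM2l => //.
rewrite ler_nat; lia.
Qed.

Lemma inner_up h j : (1 <= j)%N -> (j <= h)%N ->
  \sum_(1 <= i < j.+1) rew n h i (j - i) <= h%:R * U h + 1 + h%:R * (U h + 1).
Proof.
move=> j1 jh; rewrite big_nat_recr // subnn [X in X <= _]addrC; apply: lerD; first exact: rew0_le.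
apply: le_trans (ler_sum_nat (G := fun _ => U h + 1) _) _.
  by move=> i /andP[_ ij]; apply: rew_le_pos; rewrite subn_gt0.
rewrite sumr_const_nat -[_ *+ _]mulr_natr (mulrC h%:R); apply: ler_wpM2l.
  have := U_ge0 h; lra.
rewrite ler_nat; lia.
Qed.

Lemma Pcum_sum h : \sum_(1 <= j < h.+1) p * q ^+ j.-1 = Pcum n h.
Proof. by []. Qed.

Lemma cost_up h : (1 <= h)%N ->
  expected_cost n h <= 6 * (Pcum n h ^+ 2 * n * h%:R ^+ 2).
Proof.
move=> h1; rewrite /expected_cost.
set V := h%:R * U h + 1 + h%:R * (U h + 1).
apply: le_trans (ler_sum_nat (G := fun j => p * q ^+ j.-1 * V) _) _.
  move=> j /andP[j1 jh]; apply: ler_wpM2l; first exact: w_ge0.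
  by apply: inner_up; rewrite // -ltnS.
rewrite -mulr_suml Pcum_sum.
have hP := P_ge0 h.
have hX := @nP_ge1 h h1.
have hH : 1 <= h%:R :> R by rewrite ler1n.
have hV : V <= 6 * (n * Pcum n h * h%:R ^+ 2).
  rewrite /V /U.
  have e : h%:R * (2 * n * h%:R * Pcum n h) = 2 * (n * Pcum n h * h%:R ^+ 2) by ring.
  rewrite e.
  have : h%:R <= n * Pcum n h * h%:R ^+ 2 :> R.
    rewrite expr2; nra.
  nra.
apply: le_trans (ler_wpM2l hP hV) _.
rewrite [X in X <= _](_ : _ = 6 * (Pcum n h ^+ 2 * n * h%:R ^+ 2)) //; ring.
Qed.

Lemma rew0_eq h j : (1 <= j)%N -> (j <= h)%N ->
  rew n h j 0 = \sum_(j <= t < h) r1 n h t + 1.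
Proof. by move=> j1 jh; rewrite /rew j1 addn0 jh. Qed.

Lemma cost_lo0 h : (1 <= h)%N ->
  \sum_(1 <= j < h.+1) p * q ^+ j.-1 * rew n h j 0 <= expected_cost n h.
Proof.
move=> h1; rewrite /expected_cost; apply: ler_sum_nat => j /andP[j1 jh].
apply: ler_wpM2l; first exact: w_ge0.
rewrite big_nat_recr //= subnn lerDr; apply: sumr_ge0 => i _; exact: rew_ge0.
Qed.

Lemma cost_small h : (1 <= h)%N -> (h <= 3)%N ->
  (1 / 4096) * (Pcum n h ^+ 2 * n * h%:R ^+ 2) <= expected_cost n h.
Proof.
move=> h1 h3; apply: le_trans _ (@cost_lo0 h h1).
have HP : Pcum n h <= \sum_(1 <= j < h.+1) p * q ^+ j.-1 * rew n h j 0.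
  rewrite -Pcum_sum; apply: ler_sum_nat => j /andP[j1 jh].
  rewrite -[X in X <= _]mulr1; apply: ler_wpM2l; first exact: w_ge0.
  rewrite rew0_eq // -?ltnS // lerDr; apply: sumr_ge0 => t _; exact: r1_ge0.
apply: le_trans _ HP.
have hP := P_ge0 h.
have hnP : n * Pcum n h <= h%:R.
  apply: le_trans (ler_wpM2l _ (P_le_hp h)) _; first by have := hn; lra.
  by rewrite mulrCA np1 mulr1.
have hH : h%:R <= 3 :> R by rewrite -[3]/(3%:R) ler_nat.
have hH0 : 0 <= h%:R :> R by [].
have e : Pcum n h ^+ 2 * n * h%:R ^+ 2 = Pcum n h * ((n * Pcum n h) * (h%:R * h%:R)).
  by rewrite !expr2; ring.
rewrite e.
have h2 : (n * Pcum n h) * (h%:R * h%:R) <= 27.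
  have : h%:R * h%:R <= 9 :> R by nra.
  have : 0 <= n * Pcum n h by have := @nP_ge1 h h1; lra.
  nra.
have : 0 <= (n * Pcum n h) * (h%:R * h%:R).
  apply: mulr_ge0; [have := @nP_ge1 h h1; lra | exact: mulr_ge0].
nra.
Qed.

Lemma cost_large h : (4 <= h)%N ->
  (1 / 4096) * (Pcum n h ^+ 2 * n * h%:R ^+ 2) <= expected_cost n h.
Proof.
move=> h4.
have h1 : (1 <= h)%N by lia.
apply: le_trans _ (@cost_lo0 h h1).
set m := (h %/ 4)%N.
have m1 : (1 <= m)%N by rewrite /m; lia.
have m4 : (4 * m <= h)%N by rewrite /m; lia.
have m8 : (h <= 8 * m)%N by rewrite /m; lia.
set K := n * (m%:R * (m%:R * Pcum n m)).
have hPm := P_ge0 m.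
have Kr1 : forall t, (m <= t < 2 * m)%N -> n * (m%:R * Pcum n m) <= r1 n h t.
  move=> t /andP[mt t2m].
  apply: le_trans _ (@r1_lo h t _); last by lia.
  apply: ler_wpM2l; first by have := hn; lra.
  have hs : (2 * m <= (h - t).-1)%N by lia.
  have hm2 : (m <= 2 * m)%N by lia.
  apply: le_trans _ (@sub_range (Pcum n) 0 _ m (2 * m) (leq0n m) hm2 hs P_ge0).
  apply: le_trans _ (ler_sum_nat (F := fun _ => Pcum n m) _); last first.
    move=> i /andP[mi _]; exact: P_mono.
  rewrite sumr_const_nat (_ : (2 * m - m = m)%N) ?mulr_natl //; lia.
have Krew : forall j, (1 <= j <= m)%N -> K <= rew n h j 0.
  move=> j /andP[j1 jm]; rewrite rew0_eq //; last by lia.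
  have : K <= \sum_(m <= t < 2 * m) r1 n h t.
    apply: le_trans _ (ler_sum_nat Kr1).
    rewrite sumr_const_nat (_ : (2 * m - m = m)%N); last by lia.
    rewrite -[(n * _) *+ _]mulr_natl /K le_eqVlt; apply/orP; left; apply/eqP; ring.
  have hm2 : (m <= 2 * m)%N by lia.
  have h2m : (2 * m <= h)%N by lia.
  have := @sub_range (r1 n h) j h m (2 * m) jm hm2 h2m (@r1_ge0 h).
  lra.
have step1 : \sum_(1 <= j < m.+1) p * q ^+ j.-1 * rew n h j 0 <=
             \sum_(1 <= j < h.+1) p * q ^+ j.-1 * rew n h j 0.
  apply: sub_range => //; first by lia.
  by move=> t; apply: mulr_ge0; [exact: w_ge0 | exact: rew_ge0].
apply: le_trans _ step1.
have step2 : Pcum n m * K <= \sum_(1 <= j < m.+1) p * q ^+ j.-1 * rew n h j 0.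
  rewrite -Pcum_sum mulr_suml; apply: ler_sum_nat => j hj.
  apply: ler_wpM2l; [exact: w_ge0 | exact: Krew].
apply: le_trans _ step2.
have hP8 : Pcum n h <= 8 * Pcum n m.
  apply: le_trans (@P_mono h (8 * m) m8) _.
  by have := P_mul 8 m.
have hh8 : h%:R <= 8 * m%:R :> R.
  by rewrite -[8]/(8%:R) -natrM ler_nat.
have hPh := P_ge0 h.
have hA : Pcum n h * h%:R <= 64 * (Pcum n m * m%:R).
  have := ler0n R h; have := ler0n R m; nra.
have hA0 : 0 <= Pcum n h * h%:R by apply: mulr_ge0.
have hA2 : (Pcum n h * h%:R) ^+ 2 <= 4096 * (Pcum n m * m%:R) ^+ 2.
  rewrite !expr2; nra.
have e1 : Pcum n h ^+ 2 * n * h%:R ^+ 2 = n * (Pcum n h * h%:R) ^+ 2 by ring.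
have e2 : Pcum n m * K = n * (Pcum n m * m%:R) ^+ 2 by rewrite /K; ring.
rewrite e1 e2.
have n0 : 0 <= n by have := hn; lra.
nra.
Qed.

End Aux.

Theorem lemma4p3 (R : realType) :
  exists c1 c2 : R, 0 < c1 /\ 0 < c2 /\
    forall (n : R) (h : nat), 1 <= n -> (1 <= h)%N ->
      c1 * (Pcum n h ^+ 2 * n * (h%:R) ^+ 2) <= expected_cost n h /\
      expected_cost n h <= c2 * (Pcum n h ^+ 2 * n * (h%:R) ^+ 2).
Proof.
exists (1 / 4096), 6; split; first lra; split; first lra.
move=> n h hn h1; split; last exact: cost_up.
case: (leqP h 3) => h3; first exact: cost_small.
exact: cost_large.
Qed.
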